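(* Let $B\ge 2$ and $\eta\in\mathbb{N}$. Suppose that either $B\ge 3$ and $\gamma_B(\eta+1)>2(B-1)^2$, or $B=2$ and $\gamma_B(\eta+1)\ge B^2=4$. Then $\gamma_B(\eta)<\gamma_B(\eta+1)<\gamma_B(\eta+2)<\cdots<\gamma_B(\eta+k)$ for every $k\in\mathbb{N}$; that is, the sequence $(\gamma_B(n))_{n\ge\eta}$ is strictly increasing.
   Context: Fix an integer base $B \geq 2$. Every integer $x>0$ is written uniquely as $x=\sum_{i=0}^{L(x)-1} x_i B^i$ with digits $0 \le x_i \le B-1$ and $x_{L(x)-1}\neq 0$. Define $\mathcal{H}_B(x)=\sum_{i=0}^{L(x)-1} x_i^2$, $\mathcal{H}_B(0)=0$, $\mathcal{H}_B^0(x)=x$, $\mathcal{H}_B^{n}=\mathcal{H}_B\circ\mathcal{H}_B^{n-1}$. A positive integer $x$ is happy if $\mathcal{H}_B^n(x)=1$ for some $n\in\mathbb{N}$; its height is $\eta_B(x)=\min\{\alpha\in\mathbb{N}:\mathcal{H}_B^\alpha(x)=1\}$. For $n\in\mathbb{N}$, $\gamma_B(n)$ denotes the smallest happy number $x\ge 1$ with $\eta_B(x)=n$. *)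

(* Defs.v *)
From mathcomp Require Import all_boot.
From Stdlib Require Import ClassicalEpsilon.
Set Implicit Arguments. Unset Strict Implicit. Unset Printing Implicit Defensive.

(* Number of base-B digits L(x) of x > 0; L(0) := 0 (so H_B(0) = 0). *)
Definition ndigits (B x : nat) : nat := if x == 0 then 0 else (trunc_log B x).+1.

Definition digit (B x i : nat) : nat := (x %/ B ^ i) %% B.

Definition H (B x : nat) : nat := \sum_(i < ndigits B x) (digit B x i) ^ 2.

Definition Hiter (B n x : nat) : nat := iter n (H B) x.

(* eta_B(x) = n, i.e. n = min {a : H_B^a(x) = 1} (x is then happy). *)
Definition has_height (B n x : nat) : bool :=
  (Hiter B n x == 1) && all (fun m => Hiter B m x != 1) (iota 0 n).

Definition gamma_pred (B n : nat) : pred nat := fun x => (0 < x) && has_height B n x.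

(* gamma_B(n): the smallest happy x >= 1 with eta_B(x) = n
   (defaulting to 0 if no such x exists; for B >= 2 it always exists). *)
Definition gamma (B n : nat) : nat :=
  match excluded_middle_informative (exists x, gamma_pred B n x) with
  | left h => ex_minn h
  | right _ => 0
  end.

(* Main.v *)
Require Import Defs.
From mathcomp Require Import all_boot zify.
From Stdlib Require Import ClassicalEpsilon.

Lemma H0 B : H B 0 = 0.
Proof. by rewrite /H /ndigits eqxx big_ord0. Qed.

Lemma trunc_log_div B x : 1 < B -> B <= x ->
  trunc_log B x = (trunc_log B (x %/ B)).+1.
Proof.
move=> B1 Bx.
have B0 : 0 < B by lia.
have q0 : 0 < x %/ B by rewrite divn_gt0.
have /andP[lo hi] := trunc_log_bounds B1 q0.
apply: trunc_log_eq => //; apply/andP; split.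
  by rewrite expnS mulnC -leq_divRL.
by rewrite expnS mulnC -ltn_divLR.
Qed.

Lemma Hrec B x : 1 < B -> 0 < x -> H B x = (x %% B) ^ 2 + H B (x %/ B).
Proof.
move=> B1 x0.
have B0 : 0 < B by lia.
rewrite /H /ndigits.
have -> : (x == 0) = false by lia.
case: (ltnP x B) => xB.
  have -> : trunc_log B x = 0 by apply/eqP; rewrite trunc_log_eq0; lia.
  have -> : x %/ B = 0 by rewrite divn_small.
  by rewrite eqxx big_ord0 big_ord1 /digit expn0 divn1 addn0.
have q0 : 0 < x %/ B by rewrite divn_gt0.
have -> : (x %/ B == 0) = false by lia.
rewrite trunc_log_div // big_ord_recl /digit expn0 divn1; congr (_ + _).
apply: eq_bigr => i _; rewrite -divnMA -expnS; congr (((x %/ B ^ _) %% B) ^ 2); rewrite /bump; lia.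
Qed.

Lemma HBd B x d : 1 < B -> d < B -> H B (B * x + d) = H B x + d ^ 2.
Proof.
move=> B1 dB.
have B0 : 0 < B by lia.
case: (posnP (B * x + d)) => [e|p].
  have -> : x = 0 by lia.
  have -> : d = 0 by lia.
  by rewrite muln0 addn0 H0.
rewrite Hrec // [RHS]addnC; congr (_ + _).
- by rewrite mulnC modnMDl modn_small.
- by rewrite mulnC divnMDl // divn_small // addn0.
Qed.

Fixpoint rep (B k : nat) : nat := if k is k'.+1 then B * rep B k' + 1 else 0.

Lemma H_rep B k : 1 < B -> H B (rep B k) = k.
Proof.
move=> B1; elim: k => [|k IH] /=; first by rewrite H0.
by rewrite HBd // IH addn1.
Qed.

Lemma Hle B x : 1 < B -> H B x <= (B - 1) * x.
Proof.
move=> B1; elim: x {-2}x (leqnn x) => [|n IH] x Hx.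
  by move: Hx; rewrite leqn0 => /eqP ->; rewrite H0.
case: (posnP x) => [->|x0]; first by rewrite H0.
rewrite Hrec //.
have B0 : 0 < B by lia.
have ltq : x %/ B <= n by rewrite -ltnS; apply: leq_trans Hx; rewrite ltn_Pdiv.
have := IH _ ltq.
have e := divn_eq x B.
have lt := ltn_pmod x B0.
set q := x %/ B in e ltq *; set d := x %% B in e lt *.
move=> h.
have : d ^ 2 <= (B - 1) * d by rewrite expnS expn1; apply: leq_mul; lia.
nia.
Qed.

Lemma Hbig B x : 1 < B -> B ^ 2 <= x -> H B x < x.
Proof.
move=> B1 Bx.
have B0 : 0 < B by lia.
have x0 : 0 < x by apply: leq_trans Bx; rewrite expn_gt0 B0.
rewrite Hrec //.
have q0 : B <= x %/ B by rewrite leq_divRL // -expnSr.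
have q00 : 0 < x %/ B by lia.
rewrite (@Hrec B (x %/ B)) //.
have e := divn_eq x B.
have lt := ltn_pmod x B0.
have e2 := divn_eq (x %/ B) B.
have lt2 := ltn_pmod (x %/ B) B0.
have r0 : 0 < x %/ B %/ B by rewrite divn_gt0.
have h := Hle B (x %/ B %/ B) B1.
move: e e2 lt lt2 r0 h.
move: (x %/ B) q0 q00 => q q0 q00.
move: (q %/ B) => r.
move: (q %% B) => f.
move: (x %% B) => d.
move: (H B r) => hr e e2 lt lt2 r0 h.
rewrite e e2.
have h1 : d ^ 2 <= d + (B - 1) * (B - 2).
  rewrite expnS expn1.
  have : d * d <= d * (B - 1) by apply: leq_mul; lia.
  have : d * (B - 1) <= d + d * (B - 2) by rewrite (_ : B - 1 = (B - 2).+1) ?mulnS //; lia.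
  have : d * (B - 2) <= (B - 1) * (B - 2) by apply: leq_mul; lia.
  lia.
have h2 : f ^ 2 <= f * B.
  by rewrite expnS expn1; apply: leq_mul; lia.
have h5 : (B - 1) * (B - 2) + (B - 1) * r < r * B * B.
  have : (B - 1) * (B - 2) < B * B - (B - 1) by nia.
  have : B * B - (B - 1) <= r * (B * B - (B - 1)) by rewrite -{1}(mul1n (_ - _)); apply: leq_mul; lia.
  rewrite mulnBr -mulnA; have : (B - 1) <= B * B by nia.
  move=> ? ? ?.
  have : r * (B - 1) <= r * (B * B) by apply: leq_mul; lia.
  rewrite [(B - 1) * r]mulnC. lia.
rewrite mulnDl; lia.
Qed.

Lemma Hsmall B x : 1 < B -> x < B ^ 2 -> H B x <= 2 * (B - 1) ^ 2.
Proof.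
move=> B1 Bx.
have B0 : 0 < B by lia.
case: (posnP x) => [->|x0]; first by rewrite H0.
rewrite Hrec //.
have q : x %/ B < B by rewrite ltn_divLR // -expnSr.
have lt := ltn_pmod x B0.
have hq := Hle B (x %/ B) B1.
move: q hq lt; move: (x %/ B) (x %% B) => a d.
move: (H B a) => ha q hq lt.
have : a * (B - 1) <= (B - 1) * (B - 1) by apply: leq_mul; lia.
have : d * d <= (B - 1) * (B - 1) by apply: leq_mul; lia.
rewrite !expnS !expn0 !muln1 => h1 h2; rewrite mulnC in hq; lia.
Qed.

Lemma hhP B n x : has_height B n x <-> Hiter B n x = 1 /\ forall k, k < n -> Hiter B k x != 1.
Proof.
rewrite /has_height; split.
  case/andP=> /eqP -> /allP A; split => // k kn; apply: A; rewrite mem_iota; lia.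
case=> -> A; rewrite eqxx /=; apply/allP => k; rewrite mem_iota => kn; apply: A; lia.
Qed.

Lemma HiterS B k x : Hiter B k.+1 x = Hiter B k (H B x).
Proof. by rewrite /Hiter iterSr. Qed.

Lemma Hiter0 B n : Hiter B n 0 = 0.
Proof. by elim: n => [|n IH] //=; rewrite /Hiter /= -/(Hiter B n 0) IH H0. Qed.

Lemma height_H B n x : has_height B n.+1 x -> has_height B n (H B x).
Proof.
move/hhP=> [h1 h2]; apply/hhP; split; first by rewrite -HiterS.
by move=> k kn; rewrite -HiterS; apply: h2.
Qed.

Lemma height_up B n x : has_height B n (H B x) -> x != 1 -> has_height B n.+1 x.
Proof.
move/hhP=> [h1 h2] x1; apply/hhP; split; first by rewrite HiterS.
by case=> [|k] kn //; rewrite HiterS; apply: h2.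
Qed.

Lemma gammaP B n : (exists x, gamma_pred B n x) ->
  gamma_pred B n (gamma B n) /\ forall y, gamma_pred B n y -> gamma B n <= y.
Proof.
move=> ex; rewrite /gamma; case: excluded_middle_informative => [h|//].
by case: ex_minnP.
Qed.

Lemma gamma_ex B n : 0 < gamma B n -> exists x, gamma_pred B n x.
Proof.
rewrite /gamma; case: excluded_middle_informative => [h|//] _; exact: h.
Qed.

Theorem lemma2p3 (B eta : nat) :
  2 <= B ->
  ((3 <= B /\ 2 * (B - 1) ^ 2 < gamma B eta.+1) \/ (B = 2 /\ B ^ 2 <= gamma B eta.+1)) ->
  forall n, eta <= n -> gamma B n < gamma B n.+1.
Proof.
move=> B2 hyp.
pose T := if B == 2 then 3 else 2 * (B - 1) ^ 2.
have T1 : B ^ 2 <= T.+1.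
  rewrite /T; case: ifP => /eqP e; first by rewrite ?e. rewrite !expnS !expn0 !muln1; nia.
have T2 : 2 * (B - 1) ^ 2 <= T.
  rewrite /T; case: ifP => /eqP e; first by rewrite ?e. by [].
have T3 : 3 <= T.
  rewrite /T; case: ifP => /eqP e; first by rewrite ?e. rewrite !expnS !expn0 !muln1; nia.
have base : T < gamma B eta.+1.
  rewrite /T; case: hyp => [[h1 h2]|[h1 h2]].
    by have -> : (B == 2) = false by lia.
  by move: h2; rewrite h1 eqxx.
have claim : forall k, T < gamma B (eta.+1 + k).
  elim=> [|k IH]; first by rewrite addn0.
  set m := eta.+1 + k in IH *.
  have [yP ymin] := gammaP _ _ (gamma_ex _ _ (leq_ltn_trans (leq0n _) IH)).
  move/andP: yP => [y0 yh].
  set y := gamma B m in IH y0 yh ymin *.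
  have exz : exists x, gamma_pred B m.+1 x.
    exists (rep B y); apply/andP; split.
      case: (posnP (rep B y)) => [e|//]; move: (H_rep B y B2); rewrite e H0; lia.
    apply: height_up; first by rewrite H_rep.
    apply/eqP => e; move: (H_rep B y B2); rewrite e.
    have := HBd B 0 1 B2 B2; rewrite muln0 add0n H0 => ->; lia.
  have [zP _] := gammaP _ _ exz.
  move/andP: zP => [z0 zh].
  rewrite addnS -/m.
  set z := gamma B m.+1 in z0 zh *.
  have hz := height_H _ _ _ zh.
  have hz0 : 0 < H B z.
    case: (posnP (H B z)) => [e|//]; move/hhP: hz => [+ _]; rewrite e Hiter0 //.
  have := ymin _ (introT andP (conj hz0 hz)).
  move=> yle; rewrite ltnNge; apply/negP => zT.
  case: (ltnP z (B ^ 2)) => zB.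
    have := Hsmall B z B2 zB; lia.
  have := Hbig B z B2 zB; lia.
move=> n en.
have := claim (n - eta); rewrite (_ : eta.+1 + (n - eta) = n.+1); last by lia.
move=> hT.
have [zP _] := gammaP _ _ (gamma_ex _ _ (leq_ltn_trans (leq0n _) hT)).
move/andP: zP => [z0 zh].
set z := gamma B n.+1 in hT z0 zh *.
have hz := height_H _ _ _ zh.
have hz0 : 0 < H B z.
  case: (posnP (H B z)) => [e|//]; move/hhP: hz => [+ _]; rewrite e Hiter0 //.
have pz : gamma_pred B n (H B z) by apply/andP.
have [_ gmin] := gammaP B n (ex_intro _ (H B z) pz).
have := gmin _ pz.
have zB : B ^ 2 <= z by lia.
have := Hbig B z B2 zB; lia.
Qed.
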